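(* For any collective choice problem $\mathcal C$: (a) The set of Unimprovable policies equals $\{x\in X: x\in\Phi^{\mathrm{or}}(x)\}$. (b) For any policies $x,y$, $y\in\Phi^{\mathrm{or}}(x)$ if and only if $y$ is the outcome of some Non-Capricious equilibrium of the one-round game with initial default $x$.
   Context: Collective choice problem $\mathcal C$: voters $N=\{1,\dots,n\}$ ($n$ odd), agenda setter $A$, compact metrizable policy space $X$, continuous preferences $\succsim_i$ with continuous utilities $u_i$. $y\succsim_M x$ (resp. $y\succ_M x$): a strict majority of voters weakly (resp. strictly) prefer $y$ to $x$. $x$ is Unimprovable if no $y$ satisfies $y\succ_A x$ and $y\succ_M x$. Define $M^{w}(x)=\{y: y\succsim_M x\}$, $M^{s}(x)=\{y: y\succ_M x\}$, $M^{as}(x)=\mathrm{cl}[M^{s}(x)]\cup\{x\}$, $V_A^{as}(x)=\max_{y\in M^{as}(x)}u_A(y)$, and $\Phi^{\mathrm{or}}(x)=\{y\in X: y\in M^{w}(x),\ u_A(y)\ge V_A^{as}(x)\}$. One-round game with default $x$: the agenda setter proposes $a\in X$ (possibly mixed), voters vote simultaneously; $a$ is implemented if a majority approves, otherwise $x$. Equilibrium: subgame perfect equilibrium with as-if-pivotal voting (voters with a strict preference between the outcomes of passage and rejection vote for the preferred one). Non-Capricious: (a) the mapping from histories to continuation outcomes is deterministic and depends only on the current default and number of remaining rounds; (b) for each voter $i$ and distinct $x',y'$ with $x'\sim_i y'$, at all history–proposal pairs where acceptance yields continuation outcome $x'$ and rejection yields $y'$, voter $i$ always votes for or always votes against the proposal.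 *)

(* Defs.v *)
From HB Require Import structures.
From mathcomp Require Import all_boot all_order all_algebra.
From mathcomp Require Import all_classical all_reals all_analysis.
Set Implicit Arguments.
Unset Strict Implicit.
Unset Printing Implicit Defensive.
Import Order.TTheory GRing.Theory Num.Theory numFieldNormedType.Exports.
Local Open Scope classical_set_scope.
Local Open Scope ring_scope.

(* Collective choice problem: R the reals, X the policy space (a pointed
   metric space; compactness and Hausdorffness are hypotheses of the
   theorem), n voters indexed by 'I_n with utilities u i, agenda setter
   with utility uA.  Preferences are represented by these utilities. *)

Section CollectiveChoice.
Context {R : realType} {X : pseudoPMetricType R} {n : nat}.
Variables (u : 'I_n -> X -> R) (uA : X -> R).

Definition wmaj (y x : X) : Prop :=
  (n < 2 * #|[set i : 'I_n | (u i x <= u i y)%R]|)%N.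
Definition smaj (y x : X) : Prop :=
  (n < 2 * #|[set i : 'I_n | (u i x < u i y)%R]|)%N.

Definition unimprovable (x : X) : Prop :=
  ~ exists y : X, uA x < uA y /\ smaj y x.

Definition Mw (x : X) : set X := [set y | wmaj y x].
Definition Ms (x : X) : set X := [set y | smaj y x].
Definition Mas (x : X) : set X := closure (Ms x) `|` [set x].
(* V_A^as(x) = max_{y in M^as(x)} u_A(y); written as a supremum, which is
   the maximum whenever it is attained (it is, by compactness). *)
Definition VAas (x : X) : R := sup [set uA y | y in Mas x].
Definition Phi_or (x : X) : set X := [set y | y \in Mw x /\ VAas x <= uA y].

Definition borelX := g_sigma_algebraType (@open X).

Definition passes (vote : 'I_n -> X -> bool) (a : X) : bool :=
  (n < 2 * #|[set i : 'I_n | vote i a]|)%N.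

Definition res (x : X) (vote : 'I_n -> X -> bool) (a : X) : X :=
  if passes vote a then a else x.

(* Subgame perfect equilibrium with as-if-pivotal voting, where the setter
   may mix over proposals (sigma a Borel probability measure on X) and
   voting strategies are (pure, Borel measurable) functions of the
   proposal. *)
Definition equilibrium (x : X) (sigma : probability borelX R)
    (vote : 'I_n -> X -> bool) : Prop :=
  (* measurability of voting strategies (so that expected payoffs exist) *)
  (forall i : 'I_n, measurable ([set a | vote i a] : set borelX)) /\
  (forall (i : 'I_n) (vote' : 'I_n -> X -> bool),
      (forall j : 'I_n, j != i -> vote' j =1 vote j) ->
      forall a : X, u i (res x vote' a) <= u i (res x vote a)) /\
  (* as-if-pivotal voting: outcome of passage is a, of rejection is x *)
  (forall (i : 'I_n) (a : X), u i x < u i a -> vote i a) /\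
  (forall (i : 'I_n) (a : X), u i a < u i x -> ~~ vote i a) /\
  (forall tau : probability borelX R,
      (\int[tau]_a (uA (res x vote a))%:E <=
       \int[sigma]_a (uA (res x vote a))%:E)%E).

(* Non-Capricious, specialised to the one-round game with default x and
   deterministic continuation outcome y:
   (a) the continuation outcome from the (unique) initial history is the
       deterministic policy y;
   (b) for every voter i and distinct x' ~_i y', at all proposals where
       acceptance yields x' and rejection yields y' (here: acceptance
       yields the proposal a, rejection yields the default x) voter i
       votes the same way. *)
Definition noncapricious (x : X) (sigma : probability borelX R)
    (vote : 'I_n -> X -> bool) (y : X) : Prop :=
  sigma ([set a | res x vote a = y] : set borelX) = 1%E /\
  (forall (i : 'I_n) (x' y' : X), x' <> y' -> u i x' = u i y' ->
     forall a1 a2 : X, a1 = x' -> x = y' -> a2 = x' -> x = y' ->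
       vote i a1 = vote i a2).

Definition nc_eq_outcome (x y : X) : Prop :=
  exists (sigma : probability borelX R) (vote : 'I_n -> X -> bool),
    equilibrium x sigma vote /\ noncapricious x sigma vote y.

End CollectiveChoice.

(* Main.v *)
Require Import Defs.
From HB Require Import structures.
From mathcomp Require Import all_boot all_order all_algebra.
From mathcomp Require Import all_classical all_reals all_analysis.
From mathcomp Require Import zify measurable_realfun.
Import Order.TTheory GRing.Theory Num.Theory numFieldNormedType.Exports.
Local Open Scope classical_set_scope.
Local Open Scope ring_scope.

Lemma card_sub n (P Q : 'I_n -> Prop) : (forall i, P i -> Q i) ->
  (#|[set i : 'I_n | P i]| <= #|[set i : 'I_n | Q i]|)%N.
Proof.
move=> h; apply: subset_leq_card; apply/fintype.subsetP => i.
rewrite !in_setE /=; exact: h.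
Qed.
Lemma card_all n (P : 'I_n -> Prop) : (forall i, P i) ->
  #|[set i : 'I_n | P i]| = n.
Proof.
move=> h; rewrite -[RHS]card_ord; apply: eq_card => i.
rewrite inE; apply/idP; apply: mem_set; exact: h.
Qed.

Section Aux.
Context {R : realType} {X : pseudoPMetricType R} {n : nat}.
Variables (u : 'I_n -> X -> R) (uA : X -> R).
Hypothesis hX_compact : compact [set: X].
Hypothesis hX_hausdorff : hausdorff_space X.
Hypothesis hn_odd : odd n.
Hypothesis hu_cont : forall i : 'I_n, continuous (u i).
Hypothesis huA_cont : continuous uA.

Lemma uA_ub (A : set X) : has_ubound [set uA y | y in A].
Proof.
have hc : compact [set uA y | y in [set: X]].
  apply: continuous_compact => //; exact: continuous_subspaceT.
have hb := compact_bounded hc.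
have : has_ubound (range uA).
  case: hb => M [_ hM]. have ltrDl_lt : M < M + 1 by rewrite ltrDl.
  exists (M + 1) => _ [y _ <-].
  have := hM (M + 1) ltrDl_lt (uA y) (ex_intro2 _ _ y I erefl).
  move=> /= h; apply: le_trans h; exact: ler_norm.
move=> [M hM]; exists M => _ [y _ <-]; apply: hM; by exists y.
Qed.

Lemma VAas_ge x z : Mas u x z -> uA z <= VAas u uA x.
Proof. by move=> hz; apply: ub_le_sup; [exact: uA_ub | exists z]. Qed.

Lemma VAas_le x c : (forall z, Mas u x z -> uA z <= c) -> VAas u uA x <= c.
Proof.
move=> h; apply: ge_sup; first by exists (uA x), x => //; right.
by move=> _ [z hz <-]; exact: h.
Qed.

Lemma closure_le x c : (forall z, Ms u x z -> uA z <= c) ->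
  forall z, Mas u x z -> z <> x -> uA z <= c.
Proof.
move=> h z [hz|->//] _.
have cl : closed (uA @^-1` [set r | r <= c]).
  apply: preimage_closed; first by move=> ? _; exact: huA_cont.
  exact: closed_le.
have : closure (Ms u x) `<=` uA @^-1` [set r | r <= c].
  move/closure_id: cl => ->; apply: closureS => w hw; exact: h.
by move/(_ z hz).
Qed.

Lemma n_pos : (0 < n)%N.
Proof. by move: hn_odd; case: (n). Qed.

Lemma wmaj_refl x : wmaj u x x.
Proof. rewrite /wmaj card_all //; have := n_pos; lia. Qed.


Lemma part_a x : unimprovable u uA x <-> x \in Phi_or u uA x.
Proof.
rewrite in_setE /Phi_or /= in_setE /Mw /=.
split.
- move=> hU; split; first exact: wmaj_refl.
  apply: VAas_le => z hz.
  have [->|zx] := pselect (z = x); first exact: lexx.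
  apply: (@closure_le x (uA x) _ z hz zx) => w hw.
  rewrite leNgt; apply/negP => hlt; apply: hU; by exists w.
- move=> [_ hV] [y [hlt hs]].
  have : uA y <= VAas u uA x by apply: VAas_ge; left; exact: subset_closure.
  move=> h; have := le_trans h hV; rewrite leNgt hlt //.
Qed.

Lemma open_mX (A : set X) : open A -> measurable (A : set (@borelX R X)).
Proof. by move=> oA; exact: sub_sigma_algebra. Qed.

Lemma closed_mX (A : set X) : closed A -> measurable (A : set (@borelX R X)).
Proof.
move=> cA; rewrite -[A]setCK; apply: measurableC; apply: open_mX.
exact: closed_openC.
Qed.

Lemma set1_mX (y : X) : measurable ([set y] : set (@borelX R X)).
Proof.
apply: closed_mX; apply: accessible_closed_set1.
exact: hausdorff_accessible.
Qed.

Lemma uA_meas : measurable_fun (setT : set (@borelX R X)) uA.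
Proof.
apply: (measurability _ (measurable_realfun.RGenOpens.measurableE R)).
move=> _ [_ [a [b ->]] <-]; rewrite setTI; apply: open_mX.
move/continuousP: huA_cont; apply; exact: interval_open.
Qed.


Lemma passes_mX (vote : 'I_n -> X -> bool) :
  (forall i, measurable ([set a | vote i a] : set (@borelX R X))) ->
  measurable ([set a | passes vote a] : set (@borelX R X)).
Proof.
move=> mv.
have -> : ([set a | passes vote a] : set (@borelX R X)) =
  \bigcup_(S in [set S : {set 'I_n} | (n < 2 * #|S|)%N])
     \bigcap_(i in [set i | i \in S]) [set a | vote i a].
  apply/seteqP; split => a /=.
  - move=> hp; exists (finset (fun i => vote i a)).
      rewrite /=; move: hp; rewrite /passes.
      suff -> : #|finset (fun i => vote i a)| = #|[set i | vote i a]| by [].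
      apply: eq_card => i; rewrite inE.
      apply/idP/idP => h; [exact: mem_set | exact: (set_mem h)].
    by move=> i /=; rewrite inE.
  - move=> [S hS hcap]; rewrite /passes.
    apply: (leq_trans hS); rewrite leq_mul2l /=.
    apply: subset_leq_card; apply/fintype.subsetP => i iS.
    apply: mem_set; exact: hcap.
apply: fin_bigcup_measurable; first exact: finite_finset.
move=> S _; apply: fin_bigcap_measurable; first exact: finite_finset.
move=> i _; exact: mv.
Qed.

Lemma res_mX (x : X) (vote : 'I_n -> X -> bool) :
  (forall i, measurable ([set a | vote i a] : set (@borelX R X))) ->
  measurable_fun (setT : set (@borelX R X)) (res x vote : @borelX R X -> @borelX R X).
Proof.
move=> mv; rewrite /res.
apply: measurable_fun_ifT.
- apply: (measurable_fun_bool true); rewrite setTI; exact: passes_mX.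
- exact: measurable_id.
- exact: measurable_cst.
Qed.

Lemma f_mX (x : X) (vote : 'I_n -> X -> bool) :
  (forall i, measurable ([set a | vote i a] : set (@borelX R X))) ->
  measurable_fun (setT : set (@borelX R X)) (fun a => (uA (res x vote a))%:E).
Proof.
move=> mv; apply/measurable_EFinP.
apply: (measurableT_comp uA_meas); exact: res_mX.
Qed.


Lemma int_le_cst (mu : probability (@borelX R X) R) (f : @borelX R X -> \bar R) c :
  measurable_fun setT f -> (forall a, (f a <= c%:E)%E) ->
  (\int[mu]_a f a <= c%:E)%E.
Proof.
move=> mf hf.
have hc : (\int[mu]_a (cst c%:E) a = c%:E)%E.
  rewrite integral_cst //; set m := (X in (_ * X)%E).
  have -> : m = 1%E by rewrite /m; exact: probability_setT.
  by rewrite mule1.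
rewrite -[X in (_ <= X)%E]hc integralE [X in (_ <= X)%E]integralE.
have mc : measurable_fun (setT : set (@borelX R X)) (cst c%:E : _ -> \bar R).
  exact: measurable_cst.
have h1 : (\int[mu]_x f^\+ x <= \int[mu]_x (cst c%:E)^\+ x)%E.
  apply: (ge0_le_integral mu measurableT (fun a _ => funepos_ge0 f a)
     (measurable_funepos mf) (measurable_funepos mc)).
  move=> a _; apply: (@funepos_le _ _ setT); last exact: mem_set.
  by move=> b _; exact: hf.
have h2 : (\int[mu]_x (cst c%:E)^\- x <= \int[mu]_x f^\- x)%E.
  apply: (ge0_le_integral mu measurableT (fun a _ => funeneg_ge0 (cst c%:E) a)
     (measurable_funeneg mc) (measurable_funeneg mf)).
  move=> a _; apply: (@funeneg_le _ _ setT); last exact: mem_set.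
  by move=> b _; exact: hf.
exact: (leeB h1 h2).
Qed.



Lemma passes_mono (v1 v2 : 'I_n -> X -> bool) a :
  (forall j, v1 j a -> v2 j a) -> passes v1 a -> passes v2 a.
Proof.
move=> h; rewrite /passes => hp; apply: (leq_trans hp).
rewrite leq_mul2l /=; exact: card_sub.
Qed.

Lemma dir_to x y : y \in Phi_or u uA x -> nc_eq_outcome u uA x y.
Proof.
rewrite in_setE /Phi_or /= in_setE /Mw /= => -[hw hV].
pose vote := fun i a => (u i x < u i a) || (`[< a = y >] && (u i x <= u i a)).
have mv : forall i, measurable ([set a | vote i a] : set (@borelX R X)).
  move=> i.
  have -> : ([set a | vote i a] : set (@borelX R X)) =
     (u i @^-1` [set r | u i x < r]) `|` ([set y] `&` (u i @^-1` [set r | u i x <= r])).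
    apply/seteqP; split => a /=; rewrite /vote.
    - by case/orP => [h|/andP[/asboolP -> h]]; [left | right].
    - case => [->//|[-> h]]; apply/orP; right; apply/andP; split => //.
      exact/asboolP.
  apply: measurableU.
    by apply: open_mX; move/continuousP: (hu_cont i); apply; exact: open_gt.
  apply: measurableI; first exact: set1_mX.
  by apply: closed_mX; move/continuous_closedP: (hu_cont i); apply; exact: closed_ge.
have py : passes vote y.
  rewrite /passes; apply: (leq_trans hw); rewrite leq_mul2l /=.
  apply: card_sub => i h; rewrite /vote; apply/orP; right; apply/andP; split => //.
  exact/asboolP.
have ry : res x vote y = y by rewrite /res py.
have hopt : forall a, uA (res x vote a) <= uA y.
  move=> a; rewrite /res; case: ifP => hp.
  - have [->|ay] := pselect (a = y); first exact: lexx.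
    apply: le_trans hV; apply: VAas_ge; left; apply: subset_closure.
    rewrite /Ms /smaj /=; move: hp; rewrite /passes => hp; apply: (leq_trans hp).
    rewrite leq_mul2l /=; apply: card_sub => i; rewrite /vote.
    by case/orP => [//|/andP [/asboolP]].
  - apply: le_trans hV; apply: VAas_ge; by right.
exists (@dirac _ (@borelX R X) y R), vote; split.
- split; first exact: mv.
  split.
    move=> i vote' hj a.
    have hvi : forall j, j != i -> vote' j a = vote j a by move=> j /hj ->.
    have key : forall b1 b2 : bool, vote i a = b1 -> vote' i a = b2 ->
      (forall j, (if j == i then b2 else vote j a) = vote' j a).
      by move=> b1 b2 _ h2 j; case: eqP => [->|/eqP /hvi ->].
    have lex : vote i a -> u i x <= u i a.
      rewrite /vote => /orP [/ltW //|/andP [_ //]].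
    have lea : ~~ vote i a -> u i a <= u i x.
      rewrite /vote negb_or => /andP [h _]; by rewrite leNgt.
    rewrite /res; case hv: (vote i a); case hv': (vote' i a).
    + have e : passes vote' a = passes vote a.
        apply/idP/idP; apply: passes_mono => j;
          (case: (eqVneq j i) => [->|/hvi ->]; [by rewrite hv hv'|by []]).
      by rewrite e.
    + have m : passes vote' a -> passes vote a.
        apply: passes_mono => j; case: (eqVneq j i) => [->|/hvi ->]; by rewrite ?hv ?hv'.
      case: ifP => hp'; first by rewrite (m hp').
      case: ifP => hp //; exact: lex.
    + have m : passes vote a -> passes vote' a.
        apply: passes_mono => j; case: (eqVneq j i) => [->|/hvi ->]; by rewrite ?hv ?hv'.
      case: ifP => hp'.
        case: ifP => hp //; apply: lea; by rewrite hv.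
      case: ifP => hp //; by rewrite (m hp) in hp'.
    + have e : passes vote' a = passes vote a.
        apply/idP/idP; apply: passes_mono => j;
          (case: (eqVneq j i) => [->|/hvi ->]; [by rewrite hv hv'|by []]).
      by rewrite e.
  split; first by move=> i a h; rewrite /vote h.
  split; first by move=> i a h; rewrite /vote negb_or (lt_gtF h) (lt_geF h) andbF.
  move=> tau.
  rewrite integral_dirac //=; last exact: f_mX.
  rewrite diracT mul1e ry.
  apply: int_le_cst; first exact: f_mX.
  by move=> a; rewrite lee_fin.
- split.
    transitivity (@dirac _ (@borelX R X) y R [set a | res x vote a = y]); first by [].
    by rewrite diracE mem_set.
  by move=> i x' y' _ _ a1 a2 -> _ -> _.
Qed.


Lemma dir_from x y : nc_eq_outcome u uA x y -> y \in Phi_or u uA x.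
Proof.
move=> [sigma [vote [[mv [hnash [hp1 [hp2 hopt]]]] [hs _]]]].
rewrite in_setE /Phi_or /= in_setE /Mw /=.
have mf := @f_mX x vote mv.
pose S := ([set a | res x vote a = y] : set (@borelX R X)).
have mS : measurable S.
  have := @res_mX x vote mv measurableT [set y] (set1_mX y); by rewrite setTI.
have intS : (\int[sigma]_a (uA (res x vote a))%:E = (uA y)%:E)%E.
  rewrite (ae_eq_integral (cst (uA y)%:E)) //.
  - rewrite integral_cst //; set m := (X in (_ * X)%E).
    have -> : m = 1%E by rewrite /m; exact: probability_setT.
    by rewrite mule1.
  - exists (~` S); split.
    + exact: measurableC.
    + have h := @probability_setC _ _ _ sigma S mS.
      have hs' : sigma S = 1%E by exact: hs.
      rewrite hs' subee in h => //; exact: h.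
    + move=> a /= hna Sa; apply: hna => _; by rewrite /= Sa.
have Sne : exists a, res x vote a = y.
  apply: contrapT => hne.
  have e : S = set0 by apply/seteqP; split => a //= h; apply: hne; exists a.
  have hs' : sigma S = 1%E by exact: hs.
  move: hs'; rewrite e measure0 => /eqP; by rewrite eq_sym onee_eq0.
have hle : forall a, uA (res x vote a) <= uA y.
  move=> a; have := hopt (@dirac _ (@borelX R X) a R).
  rewrite intS integral_dirac // diracT mul1e lee_fin //.
split.
- case: Sne => a; rewrite /res; case: ifP => hp <-.
  + rewrite /wmaj; apply: (leq_trans hp); rewrite leq_mul2l /=.
    apply: card_sub => i hv; rewrite leNgt; apply/negP => h.
    by have := hp2 i a h; rewrite hv.
  + exact: wmaj_refl.
- apply: VAas_le => z hz.
  have [->|zx] := pselect (z = x).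
    by have := hle x; rewrite /res; case: ifP.
  apply: (@closure_le x (uA y) _ z hz zx) => w hw.
  have pw : passes vote w.
    rewrite /passes; apply: (leq_trans hw); rewrite leq_mul2l /=.
    apply: card_sub => i h; exact: hp1.
  by have := hle w; rewrite /res pw.
Qed.

End Aux.

Theorem lemma4 (R : realType) (X : pseudoPMetricType R) (n : nat)
  (u : 'I_n -> X -> R) (uA : X -> R)
  (hX_compact : compact [set: X]) (hX_hausdorff : hausdorff_space X)
  (hn_odd : odd n)
  (hu_cont : forall i : 'I_n, continuous (u i)) (huA_cont : continuous uA) :
  [set x | unimprovable u uA x] = [set x | x \in Phi_or u uA x] /\
  (forall x y : X, y \in Phi_or u uA x <-> nc_eq_outcome u uA x y).
Proof.
split.
  apply/seteqP; split => x /= h; [exact: (part_a u uA hX_compact hn_odd huA_cont x).1 | exact: (part_a u uA hX_compact hn_odd huA_cont x).2].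
move=> x y; split; [exact: (dir_to u uA hX_compact hX_hausdorff hu_cont huA_cont) | exact: (dir_from u uA hX_hausdorff hn_odd huA_cont)].
Qed.
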